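(* Let $G$ be a finite, simple, connected graph of order $n$ and maximum degree $\Delta$. (1) If $n-2\le\Delta\le n-1$, then $\gamma_P(G)=1$. (2) If $n-4\le\Delta\le n-3$, then $1\le\gamma_P(G)\le 2$.
   Context: For $U\subseteq V(G)$, $cl(U)$ is obtained by coloring $U$ black and repeatedly applying: if a black vertex has exactly one white neighbor, that neighbor becomes black. $S$ is a power dominating set if $cl(N[S])=V(G)$; $\gamma_P(G)$ is the minimum size of a power dominating set. *)

(* Defs.v *)
From mathcomp Require Import all_boot all_order all_algebra.
Set Implicit Arguments. Unset Strict Implicit. Unset Printing Implicit Defensive.

(* A finite simple graph: vertex type T : finType, adjacency e : rel T,
   assumed symmetric and irreflexive in the theorem. *)

Section PD.
Variables (T : finType) (e : rel T).

Definition nbhd (v : T) : {set T} := [set w | e v w].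
Definition cnbhd_set (S : {set T}) : {set T} := S :|: \bigcup_(v in S) nbhd v.
Definition deg (v : T) : nat := #|nbhd v|.
Definition maxdeg : nat := \max_(v : T) deg v.

(* B is closed under the color-change rule: whenever a black vertex v has
   exactly one white neighbour w, w is black. *)
Definition cc_closed (B : {set T}) : bool :=
  [forall v, forall w, (v \in B) && (nbhd v :\: B == [set w]) ==> (w \in B)].

(* cl U: the result of repeatedly applying the rule starting from U, i.e.
   the least superset of U closed under the rule. *)
Definition cl (U : {set T}) : {set T} :=
  [set x | [forall B : {set T}, (U \subset B) && cc_closed B ==> (x \in B)]].

Definition power_dominating (S : {set T}) : bool := cl (cnbhd_set S) == setT.

Definition gammaP : nat :=
  \big[minn/#|T|]_(S : {set T} | power_dominating S) #|S|.

Definition connected_graph : Prop := forall x y : T, connect e x y.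
End PD.

(* Main.v *)
Require Import Defs.
From mathcomp Require Import all_boot all_order all_algebra zify.
Import Order.TTheory GRing.Theory Num.Theory.

Module Aux.
Set Implicit Arguments. Unset Strict Implicit.
Section L.
Variables (T : finType) (e : rel T).
Hypothesis Hsym : symmetric e.
Hypothesis Hirr : irreflexive e.
Hypothesis Hconn : connected_graph e.

Lemma cl_sub (U : {set T}) x : x \in U -> x \in cl e U.
Proof.
move=> xU; rewrite inE; apply/forallP => B; apply/implyP => /andP [sUB _].
exact: (subsetP sUB).
Qed.

Lemma cl_force (U : {set T}) v w : v \in cl e U -> e v w ->
  (forall y, e v y -> y != w -> y \in cl e U) -> w \in cl e U.
Proof.
move=> vU evw H; rewrite inE; apply/forallP => B; apply/implyP => /andP [sUB cB].
have clB : forall x, x \in cl e U -> x \in B.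
  by move=> x; rewrite inE => /forallP /(_ B); rewrite sUB cB.
case: (boolP (w \in B)) => // wB.
move/forallP: cB => /(_ v) /forallP /(_ w); rewrite (clB _ vU) /= => /implyP Hi.
suff : nbhd e v :\: B == [set w] by move/Hi; rewrite (negbTE wB).
apply/eqP; apply/setP => y; rewrite /nbhd !inE.
case: (eqVneq y w) => [->|ynw]; first by rewrite (negbTE wB) evw.
case: (boolP (e v y)) => //= evy.
by rewrite (clB _ (H _ evy ynw)).
by rewrite andbF.
Qed.

Lemma cl_last (U : {set T}) v w : v \in cl e U -> (forall y, y != w -> y \in cl e U) ->
  w \in cl e U.
Proof.
move=> vU H; case: (eqVneq w v) => [->//|wv].
have /connectP [p pth lst] := Hconn w v.
case: p pth lst => [|y p] /=; first by move=> _ E; rewrite E eqxx in wv.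
case/andP => ewy _ _.
have yw : y != w by apply/eqP => E; rewrite E Hirr in ewy.
apply: (@cl_force U y w (H _ yw)); first by rewrite Hsym.
by move=> z _ zw; apply: H.
Qed.

Lemma cl_full (U : {set T}) v : v \in cl e U ->
  (forall x y, x \notin cl e U -> y \notin cl e U -> x = y) -> cl e U = setT.
Proof.
move=> vU H; apply/setP => w; rewrite in_setT.
apply/negPn/negP => wn; apply: (negP wn).
apply: (@cl_last U v w vU) => y yw; apply/negPn/negP => yn.
by rewrite (H _ _ yn wn) eqxx in yw.
Qed.

Lemma exit_set (A : pred T) x p : x \in A -> path e x p -> last x p \notin A ->
  exists z z', [/\ z \in A, z' \notin A & e z z'].
Proof.
elim: p x => [|y p IH] x /= xA; first by rewrite xA.
case/andP => exy pth lst.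
case: (boolP (y \in A)) => yA; first exact: IH yA pth lst.
by exists x, y.
Qed.

Lemma cn_sub (S : {set T}) v x : v \in S -> (x == v) || e v x -> x \in cnbhd_set e S.
Proof.
move=> vS /orP [/eqP->|evx]; rewrite /cnbhd_set inE; first by rewrite vS.
apply/orP; right; apply/bigcupP; exists v => //; by rewrite /nbhd inE.
Qed.

Lemma gP_le (S : {set T}) : power_dominating e S -> gammaP e <= #|S|.
Proof.
move=> pS; rewrite /gammaP.
have : S \in index_enum (finset_set_of__canonical__fintype_Finite T) by rewrite mem_index_enum.
elim: (index_enum _) => [//|a r IH]; rewrite inE big_cons.
case/orP => [/eqP <-|Sr]; first by rewrite pS geq_minl.
case: ifP => _; last exact: IH.
by rewrite geq_min IH ?orbT.
Qed.

Lemma gP_ge : 0 < #|T| -> 1 <= gammaP e.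
Proof.
move=> Hn; rewrite /gammaP; apply: (big_ind (fun m => 1 <= m)) => //.
  by move=> a b; rewrite leq_min => -> ->.
move=> S pS; rewrite card_gt0; apply/eqP => S0; move: pS.
rewrite S0 /power_dominating.
have -> : cnbhd_set e set0 = set0.
  by rewrite /cnbhd_set big_pred0 ?set0U // => x; rewrite inE.
have -> : cl e set0 = set0.
  apply/setP => x; rewrite !inE; apply/negbTE/negP => /forallP /(_ set0).
  rewrite sub0set /= => /implyP H.
  have : x \in set0 by apply H; apply/forallP => a; apply/forallP => b; rewrite inE.
  by rewrite inE.
case/card_gt0P: Hn => x _; by move/eqP/setP/(_ x); rewrite !inE.
Qed.
End L.
End Aux.
Import Aux.

Lemma uniq_card (T : finType) (A : {set T}) (s : seq T) :
  uniq s -> all (mem A) s -> size s <= #|A|.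
Proof.
move=> u H; rewrite -(card_uniqP u); apply: subset_leq_card.
by apply/subsetP => z zs; exact: (allP H).
Qed.

Lemma finish (T : finType) (e : rel T) (Hsym : symmetric e) (Hirr : irreflexive e)
  (Hconn : connected_graph e) (U : {set T}) v y z z' :
  v \in cl e U -> y \in cl e U -> e y z -> ~~ e y z' ->
  (forall t, t != z -> t != z' -> t \in cl e U) -> cl e U = setT.
Proof.
move=> vU yU eyz neyz' H.
have zU : z \in cl e U.
  apply: (cl_force yU eyz) => t eyt tz; apply: H => //.
  by apply/eqP => E; rewrite -E eyt in neyz'.
apply: (cl_full Hsym Hirr Hconn vU) => x x' xn x'n.
have xz' : x = z'.
  apply/eqP/negPn/negP => xz; apply: (negP xn); apply: H => //.
  by apply/eqP => E; rewrite E zU in xn.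
have x'z' : x' = z'.
  apply/eqP/negPn/negP => xz; apply: (negP x'n); apply: H => //.
  by apply/eqP => E; rewrite E zU in x'n.
by rewrite xz' x'z'.
Qed.

Theorem mainTheorem5 (T : finType) (e : rel T)
  (Hsym : symmetric e) (Hirr : irreflexive e)
  (Hne : 0 < #|T|) (Hconn : connected_graph e) :
  let n : int := Posz #|T| in
  let D : int := Posz (maxdeg e) in
  ((n - 2 <= D)%R -> (D <= n - 1)%R -> gammaP e = 1) /\
  ((n - 4 <= D)%R -> (D <= n - 3)%R -> 1 <= gammaP e <= 2).
Proof.
move=> n D.
have [v Hv] := @bigop.eq_bigmax T (fun v => deg e v) Hne.
have Hmd : maxdeg e = deg e v by [].
pose N := v |: nbhd e v.
have cardN : #|N| = (deg e v).+1.
  by rewrite cardsU1 /nbhd inE Hirr.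
have cardW : #|~: N| = #|T| - (deg e v).+1 by rewrite cardsCs setCK cardN.
have Ncl : forall (S : {set T}) x, v \in S -> x \in N -> x \in cl e (cnbhd_set e S).
  move=> S x vS xN; apply: cl_sub; apply: cn_sub vS _.
  by move: xN; rewrite /N /nbhd !inE.
have vS2 : forall u, v \in [set v; u] by move=> u; rewrite !inE eqxx.
have uS2 : forall u, u \in [set v; u] by move=> u; rewrite !inE eqxx orbT.
have c2 : forall u, #|[set v; u]| <= 2 by move=> u; rewrite cards2; case: (v != u).
have gge := gP_ge e Hne.
split.
- rewrite /n /D => H1 _.
  have hW : #|~: N| <= 1 by rewrite cardW; lia.
  have pd : power_dominating e [set v].
    apply/eqP; apply: (cl_full Hsym Hirr Hconn (v := v)).
      by apply: Ncl; rewrite !inE ?eqxx.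
    move=> x y xn yn; apply/eqP/negPn/negP => xy.
    have := @uniq_card T (~: N) [:: x; y].
    rewrite /= inE xy /= => /(_ isT).
    have xN : x \notin N by apply/negP => /(Ncl [set v]); rewrite (negbTE xn) inE eqxx => /(_ isT).
    have yN : y \notin N by apply/negP => /(Ncl [set v]); rewrite (negbTE yn) inE eqxx => /(_ isT).
    rewrite !in_setC xN yN /= => /(_ isT) H; lia.
  apply/eqP; rewrite eqn_leq gge andbT.
  by have := gP_le pd; rewrite cards1.
- rewrite /n /D => H1 _.
  have hW : #|~: N| <= 3 by rewrite cardW; lia.
  rewrite gge /=.
  pose Nu u := u |: nbhd e u.
  case: (boolP [exists u, [forall x, [forall y, ((x \notin N) && (x \notin Nu u) && (y \notin N) && (y \notin Nu u)) ==> (x == y)]]]).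
  + case/existsP => u /forallP Hu.
    apply: (leq_trans _ (c2 u)); apply: gP_le.
    apply/eqP; apply: (cl_full Hsym Hirr Hconn (v := v)); first by apply: Ncl; rewrite !inE eqxx.
    move=> x y xn yn.
    have inU : forall t, t \notin cl e (cnbhd_set e [set v; u]) -> (t \notin N) && (t \notin Nu u).
      move=> t tn; apply/andP; split; apply/negP => tN; apply: (negP tn).
        by apply: Ncl.
      apply: cl_sub; apply: (cn_sub (uS2 u)); move: tN; rewrite /Nu /nbhd !inE.
      done.
    have /andP [h1 h2] := inU _ xn; have /andP [h3 h4] := inU _ yn.
    by move/forallP: (Hu x) => /(_ y); rewrite h1 h2 h3 h4 => /eqP.
  + move=> nA.
    have nAu : forall u, exists x y, [/\ x \notin N, x \notin Nu u, y \notin N, y \notin Nu u & x != y].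
      move=> u; move/existsPn: nA => /(_ u) /forallPn [x] /forallPn [y].
      by rewrite negb_imply => /andP [/andP [/andP [/andP [h1 h2] h3] h4] h5]; exists x, y.
    have [a [x0 [aN _ _ _ _]]] := nAu v.
    have [b [c [bN ba cN ca bc]]] := nAu a.
    move: ba ca; rewrite /Nu /nbhd !inE !negb_or => /andP [ba eab] /andP [ca eac].
    have rest : forall t, t \notin N -> t != b -> t != c -> t = a.
      move=> t tN tb tc; apply/eqP/negPn/negP => ta.
      have := @uniq_card T (~: N) [:: t; a; b; c].
      rewrite /= !inE !negb_or ta tb tc eq_sym ba eq_sym ca bc /=.
      move: tN aN bN cN; rewrite /N /nbhd !inE !negb_or => -> -> -> -> /= /(_ isT isT) H; rewrite -/N in H; lia.
    pose S := [set v; a].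
    have inclU : forall t, t != b -> t != c -> t \in cl e (cnbhd_set e S).
      move=> t tb tc; case: (boolP (t \in N)) => tN; first by apply: Ncl => //; rewrite /S !inE eqxx.
      rewrite (rest t tN tb tc); apply: cl_sub; rewrite /cnbhd_set inE uS2 //.
    have vU : v \in cl e (cnbhd_set e S) by apply: Ncl => //; rewrite /S !inE eqxx.
    have /connectP [p pth lst] := Hconn b v.
    have bA : b \in [pred t | (t == b) || (t == c)] by rewrite inE /= eqxx.
    have lA : last b p \notin [pred t | (t == b) || (t == c)].
      rewrite -lst inE /=; apply/negP => /orP [] /eqP E; [move: bN | move: cN]; by rewrite -E !inE eqxx.
    have [z [y [zA yA ezy]]] := exit_set bA pth lA.
    move: zA yA; rewrite /= negb_or => zbc /andP [yb yc].
    have yU := inclU y yb yc.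
    have eyz : e y z by rewrite Hsym.
    have pd : power_dominating e S.
      apply/eqP; case: (boolP (e y b && e y c)) => [/andP [eyb eyc]|].
        exfalso; apply: (negP nA); apply/existsP; exists y; apply/forallP => x; apply/forallP => x'.
        apply/implyP => /andP [/andP [/andP [h1 h2] h3] h4].
        move: h2 h4; rewrite /Nu /nbhd !inE !negb_or => /andP [_ h2] /andP [_ h4].
        have xb : x != b by apply/eqP => E; rewrite E eyb in h2.
        have xc : x != c by apply/eqP => E; rewrite E eyc in h2.
        have x'b : x' != b by apply/eqP => E; rewrite E eyb in h4.
        have x'c : x' != c by apply/eqP => E; rewrite E eyc in h4.
        by rewrite (rest x h1 xb xc) (rest x' h3 x'b x'c).
      rewrite negb_and => nyy.
      case/orP: zbc => /eqP Ez; subst z.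
        have nyc : ~~ e y c by move: nyy; rewrite eyz.
        exact: (@finish _ _ Hsym Hirr Hconn _ _ _ _ _ vU yU eyz nyc inclU).
      have nyb : ~~ e y b by move: nyy; rewrite eyz orbF.
      apply: (@finish _ _ Hsym Hirr Hconn _ _ _ _ _ vU yU eyz nyb) => t t1 t2; exact: inclU.
    exact: leq_trans (gP_le pd) (c2 a).
Qed.
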